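(* Let $\mathbf S_1,\dots,\mathbf S_n$ be nice subcategories of shrinkings. Then for every pointed digraph $(G,g)$ and $n\ge0$ the canonical map $$\mathrm{colim}_{(J_1,\dots,J_n)\in\mathbf S_1^{\mathrm{op}}\times\dots\times\mathbf S_n^{\mathrm{op}}}\Big[\bigotimes_{i=1}^n(J_i,\partial J_i),(G,g)\Big]\longrightarrow A_n(G,g)$$ is a bijection. Likewise, for a single nice subcategory $\mathbf S$, the canonical map $\mathrm{colim}_{J\in\mathbf S^{\mathrm{op}}}[(J,\partial J)^{\otimes n},(G,g)]\to A_n(G,g)$ is a bijection.
   Context: Digraphs: vertex sets with arrows $E\subseteq V^2$ containing the diagonal; digraph maps preserve arrows. Box product $G\otimes H$: arrow $(g,h)\to(g',h')$ iff ($g\to g'$, $h=h'$) or ($g=g'$, $h\to h'$). An interval is a digraph on $\{0,\dots,k\}$ whose non-degenerate arrows are exactly one of $i\to i+1$, $i+1\to i$ for each $i<k$; $\partial J=\{0,k\}$. A shrinking is a digraph map of intervals surjective and monotone on vertices; $\mathsf{Shr}$ is the category of all intervals and shrinkings. A nice subcategory of shrinkings is a (not necessarily full) subcategory $\mathbf S\subseteq\mathsf{Shr}$ such that (1) for every interval $J$ there is $J'\in\mathbf S$ and a shrinking $J'\to J$; (2) for $J,J'\in\mathbf S$, if there exists a shrinking $J'\to J$ then there exists a morphism $J'\to J$ in $\mathbf S$. Pairs $(G,H)$ ($H$ an induced subdigraph), maps of pairs, $(G,H)\otimes(G',H')=(G\otimes G',G\otimes H'\cup H\otimes G')$; two pair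 maps are homotopic rel $H$ if joined by a chain of pair maps agreeing on $H$ where consecutive maps satisfy $\varphi_t(x)\to\varphi_{t+1}(x)$ for all $x$ or the reverse for all $x$; $[-,-]$ denotes classes; $(G,g)=(G,\{g\})$. $A_n(G,g)=\mathrm{colim}_{(J_1,\dots,J_n)\in(\mathsf{Shr}^{\mathrm{op}})^n}[\bigotimes_i(J_i,\partial J_i),(G,g)]$, with functoriality by precomposition. *)

(* Defs.v *)
From Stdlib Require Import Relations.Relation_Operators.
From mathcomp Require Import all_boot.

Set Implicit Arguments.
Unset Strict Implicit.
Unset Printing Implicit Defensive.

Record digraph := Digraph {
  vtx :> Type;
  arr : vtx -> vtx -> Prop;
  arr_refl : forall x, arr x x }.

(* An interval of length k is encoded by s : seq bool with
   size s = k; its vertices are 0..k, and for i < k the i-th entry tells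
   the orientation of the edge between i and i+1:
   true  <-> i -> i+1,   false <-> i+1 -> i.                           *)
Definition interval := seq bool.

Definition iarr (J : interval) (i j : nat) : bool :=
  [|| i == j,
      (j == i.+1) && nth false J i
    | (i == j.+1) && ~~ nth false J j].

(* A shrinking J' -> J: a map of vertex sets {0..k'} -> {0..k}
   (represented by f : nat -> nat, values outside {0..k'} irrelevant)
   which is a digraph map, surjective and monotone.                    *)
Definition shrinking (J' J : interval) (f : nat -> nat) : Prop :=
  [/\ (forall i, i <= size J' -> f i <= size J),
      (forall j, j <= size J -> exists2 i, i <= size J' & f i = j),
      (forall i j, i <= j -> j <= size J' -> f i <= f j)
    & (forall i j, i <= size J' -> j <= size J' ->
          iarr J' i j -> iarr J (f i) (f j))].

Record subcat := Subcat {
  sobj : interval -> Prop;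
  smor : interval -> interval -> (nat -> nat) -> Prop;
  smor_shr : forall J' J f, smor J' J f -> [/\ sobj J', sobj J & shrinking J' J f];
  smor_ext : forall J' J f f', smor J' J f ->
      (forall i, i <= size J' -> f i = f' i) -> smor J' J f';
  smor_id : forall J, sobj J -> smor J J id;
  smor_comp : forall J'' J' J f h, smor J'' J' f -> smor J' J h ->
      smor J'' J (h \o f) }.

Record nice_subcat := NiceSubcat {
  nsc :> subcat;
  nice1 : forall J, exists2 J', sobj nsc J' & exists f, shrinking J' J f;
  nice2 : forall J J', sobj nsc J -> sobj nsc J' ->
      (exists f, shrinking J' J f) -> exists f, smor nsc J' J f }.

(* Box products of n intervals J : 'I_n -> interval, as pairs
   (J_1 x ... x J_n, boundary).  Vertices are finite functions
   x : 'I_n -> nat with x i <= size (J i) ("valid" points); maps out of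
   the box are functions on {ffun 'I_n -> nat} whose values at invalid
   points are irrelevant (all conditions quantify over valid points).  *)
Definition bvalid n (J : 'I_n -> interval) (x : {ffun 'I_n -> nat}) : Prop :=
  forall i, x i <= size (J i).

Definition boxarr n (J : 'I_n -> interval) (x y : {ffun 'I_n -> nat}) : Prop :=
  x = y \/ exists i, iarr (J i) (x i) (y i) /\ (forall j, j != i -> x j = y j).

(* The subpair of the iterated pair product (J_i, dJ_i): points having
   some coordinate in the boundary {0, k_i}.  (For n = 0 it is empty.) *)
Definition boxbd n (J : 'I_n -> interval) (x : {ffun 'I_n -> nat}) : Prop :=
  exists i, x i = 0 \/ x i = size (J i).

Definition pair_map (G : digraph) (g : G) n (J : 'I_n -> interval)
    (phi : {ffun 'I_n -> nat} -> G) : Prop :=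
  (forall x y, bvalid J x -> bvalid J y -> boxarr J x y -> arr (phi x) (phi y))
  /\ (forall x, bvalid J x -> boxbd J x -> phi x = g).

Definition hstep (G : digraph) (g : G) n (J : 'I_n -> interval)
    (phi psi : {ffun 'I_n -> nat} -> G) : Prop :=
  [/\ pair_map g J phi, pair_map g J psi,
      (forall x, bvalid J x -> boxbd J x -> phi x = psi x)
    & (forall x, bvalid J x -> arr (phi x) (psi x)) \/
      (forall x, bvalid J x -> arr (psi x) (phi x))].

Definition homotopic (G : digraph) (g : G) n (J : 'I_n -> interval) :=
  clos_refl_trans _ (hstep g J).

Definition fmap n (f : 'I_n -> nat -> nat) (x : {ffun 'I_n -> nat})
  : {ffun 'I_n -> nat} := [ffun i => f i (x i)].

(* Colimits over an index category of the functors
   a |-> [ box(tup a), (G,g) ]   (contravariant, by precomposition).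
   A diagram: index objects, their interval tuples, and the morphisms
   a' -> a given as tuples of vertex maps tup a' i -> tup a i.          *)
Record diagram n := Diagram {
  dI : Type;
  dtup : dI -> 'I_n -> interval;
  dobj : dI -> Prop;
  dmor : dI -> dI -> ('I_n -> nat -> nat) -> Prop }.

(* Elements of the disjoint union: (index object, representative map). *)
Definition celem (G : digraph) n (D : diagram n) :=
  (dI D * ({ffun 'I_n -> nat} -> G))%type.

Definition cvalid (G : digraph) (g : G) n (D : diagram n) (e : celem G D) :=
  @dobj n D e.1 /\ pair_map g (@dtup n D e.1) e.2.

Definition cstep (G : digraph) (g : G) n (D : diagram n) (e e' : celem G D) :=
  [/\ cvalid g e, cvalid g e' &
      (e.1 = e'.1 /\ homotopic g (@dtup n D e.1) e.2 e'.2) \/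
      (exists f, @dmor n D e'.1 e.1 f /\
         forall x, bvalid (@dtup n D e'.1) x -> e'.2 x = e.2 (fmap f x))].

(* The colimit is the set of valid elements modulo this equivalence. *)
Definition crel (G : digraph) (g : G) n (D : diagram n) :=
  clos_refl_sym_trans _ (fun e e' : celem G D => cstep g e e').

(* The map induced by an index functor u (on representatives, identity on
   maps) is a bijection of colimits: surjective and injective on classes. *)
Definition canon_bijective (G : digraph) (g : G) n (D1 D2 : diagram n)
    (u : dI D1 -> dI D2) : Prop :=
  (forall e2 : celem G D2, cvalid g e2 ->
     exists2 e1 : celem G D1, cvalid g e1 & crel g (u e1.1, e1.2) e2)
  /\ (forall e1 e1' : celem G D1, cvalid g e1 -> cvalid g e1' ->
        crel g (u e1.1, e1.2) (u e1'.1, e1'.2) -> crel g e1 e1').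

(* Shr^n: the diagram defining A_n(G,g). *)
Definition Shr_diag n : diagram n :=
  @Diagram n ('I_n -> interval) id (fun _ => True)
    (fun J' J f => forall i, shrinking (J' i) (J i) (f i)).

Definition prod_diag n (S : 'I_n -> nice_subcat) : diagram n :=
  @Diagram n ('I_n -> interval) id (fun J => forall i, sobj (S i) (J i))
    (fun J' J f => forall i, smor (S i) (J' i) (J i) (f i)).

Definition diag_diag n (S : nice_subcat) : diagram n :=
  @Diagram n interval (fun J _ => J) (sobj S)
    (fun J' J f => exists2 f0, smor S J' J f0 & forall i, f i = f0).

(* Main.v *)
Require Import Defs.
From Stdlib Require Import Relations.Relation_Operators Relations.Operators_Properties.
From Stdlib Require Import ClassicalEpsilon.
From mathcomp Require Import all_boot zify.
Set Implicit Arguments.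
Unset Strict Implicit.
Unset Printing Implicit Defensive.

Definition shr_loc (K J : interval) (s : nat -> nat) : Prop :=
  [/\ s 0 = 0, s (size K) = size J &
    forall x, x < size K -> s x.+1 = s x \/ (s x.+1 = (s x).+1 /\ nth false K x = nth false J (s x))].

Lemma shr_mono K J s : shr_loc K J s -> forall i j, i <= j -> j <= size K -> s i <= s j.
Proof.
case=> _ _ H i j ij jK.
elim: j ij jK => [|j IH] ij jK; first by rewrite leqn0 in ij; rewrite (eqP ij).
rewrite leq_eqVlt in ij; case/orP: ij => [/eqP->//|ij].
have := IH ij (ltnW jK); have [->|[-> _]] := H j jK; lia.
Qed.

Lemma loc_shr K J s : shr_loc K J s -> shrinking K J s.
Proof.
move=> L; have M := shr_mono L; case: L => s0 sk H; split.
- by move=> i iK; rewrite -sk; apply: M.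
- suff: forall x, x <= size K -> forall y, y <= s x -> exists2 i, i <= x & s i = y.
    move=> P j jJ; have jJ' : j <= s (size K) by rewrite sk.
    by have [i ix <-] := P _ (leqnn _) j jJ'; exists i.
  elim=> [|x IH] xK y ys; first by exists 0 => //; rewrite s0 in ys; lia.
  have [yx|yx] := leqP y (s x).
    by have [i ? ?] := IH (ltnW xK) y yx; exists i => //; lia.
  exists x.+1 => //; have [E|[E _]] := H x xK; lia.
- by move=> i j ij jK; apply: M.
- move=> i j iK jK; rewrite /iarr; case/or3P=> [/eqP->|/andP[/eqP E Ki]|/andP[/eqP E Kj]]; subst.
  + by rewrite eqxx.
  + have [->|[-> E]] := H i jK; first by rewrite eqxx.
    by rewrite -E Ki eqxx /= orbT.
  + have [->|[-> E]] := H j iK; first by rewrite eqxx.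
    by rewrite -E Kj eqxx /= !orbT.
Qed.

Lemma shr_loc_of K J s : shrinking K J s -> shr_loc K J s.
Proof.
case=> B S M A.
have s0 : s 0 = 0.
  have [i iK si] := S 0 (leq0n _); have := M 0 i (leq0n _) iK; lia.
have sk : s (size K) = size J.
  have [i iK si] := S _ (leqnn _); have := M i _ iK (leqnn _); have := B _ (leqnn (size K)); lia.
split=> // x xK.
have mx := M x x.+1 (leqnSn _) xK.
case Kx: (nth false K x).
- have := A x x.+1 (ltnW xK) xK; rewrite /iarr eqxx Kx /=.
  move=> /(_ (orbT _)); case/or3P=> [/eqP<-|/andP[/eqP E Jx]|/andP[/eqP E _]]; [by left|right|lia].
  by rewrite E Jx.
- have := A x.+1 x xK (ltnW xK); rewrite /iarr eqxx Kx /= orbT.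
  move=> /(_ (orbT _)); case/or3P=> [/eqP->|/andP[/eqP E _]|/andP[/eqP E Jx]]; [by left|lia|right].
  by rewrite E; move: Jx; case: (nth false J (s x)).
Qed.

Lemma shr_comp K L J f h : shrinking K L f -> shrinking L J h -> shrinking K J (h \o f).
Proof.
case=> B1 S1 M1 A1 [B2 S2 M2 A2]; split.
- by move=> i iK /=; apply: B2; apply: B1.
- move=> j jJ; have [l lL <-] := S2 j jJ; have [i iK <-] := S1 l lL; by exists i.
- by move=> i j ij jK /=; apply: M2; [apply: M1|apply: B1].
- by move=> i j iK jK a /=; apply: A2; [apply: B1|apply: B1|apply: A1].
Qed.

Lemma shr_id J : shrinking J J id.
Proof. by split=> // j jJ; exists j. Qed.

Lemma shr_catl J1 J2 : shrinking (J1 ++ J2) J1 (fun i => minn i (size J1)).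
Proof.
apply: loc_shr; split; rewrite ?size_cat ?min0n //; first lia.
move=> x xK; have [xs|xs] := ltnP x (size J1).
- right; rewrite nth_cat xs; split; first lia.
  done.
- left; lia.
Qed.

Lemma shr_catr J1 J2 : shrinking (J1 ++ J2) J2 (fun i => i - size J1).
Proof.
apply: loc_shr; split; rewrite ?size_cat ?sub0n //; first lia.
move=> x xK; have [xs|xs] := ltnP x (size J1).
- left; lia.
- right; rewrite nth_cat ltnNge xs /=; split; lia.
Qed.

Lemma common_ref (l : seq interval) : exists L, forall J, J \in l -> exists f, shrinking L J f.
Proof.
elim: l => [|J0 l [L HL]]; first by exists [::].
exists (J0 ++ L) => J; rewrite inE; case/orP=> [/eqP->|Jl].
  by exists (fun i => minn i (size J0)); apply: shr_catl.
have [f Hf] := HL J Jl; exists (f \o (fun i => i - size J0)).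
exact: shr_comp (shr_catr J0 L) Hf.
Qed.

Definition step1 K J (s t : nat -> nat) : Prop :=
  [/\ shrinking K J s, shrinking K J t &
   (forall x, x <= size K -> iarr J (s x) (t x)) \/ (forall x, x <= size K -> iarr J (t x) (s x))].

Lemma step1_sym K J s t : step1 K J s t -> step1 K J t s.
Proof. by case=> a b [c|c]; split=> //; [right|left]. Qed.

Lemma modif K J t p : shrinking K J t -> p < size K -> t p.+1 = t p -> t p < size J ->
  nth false K p = nth false J (t p) ->
  step1 K J t (fun x => if p < x then maxn (t x) (t p).+1 else t x).
Proof.
move=> Ht pK tp vJ Kp.
have M := shr_mono (shr_loc_of Ht); have [t0 tk H] := shr_loc_of Ht.
set v := t p.
have Ht' : shrinking K J (fun x => if p < x then maxn (t x) v.+1 else t x).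
  apply: loc_shr; split => //; first by rewrite (leq_trans _ pK) // tk; lia.
  move=> x xK; have [px|px] := ltnP p x.
  - have -> : p < x.+1 by lia.
    have mpx := M p x (ltnW px) (ltnW xK).
    have [E|[E KE]] := H x xK; first by left; rewrite E.
    have [vx|vx] := leqP v.+1 (t x).
      by right; rewrite !(maxn_idPl _) //; lia.
    left; lia.
  - have [Ex|Ex] := eqVneq x p.
      subst x; rewrite ltnSn tp /v; right; split=> //; lia.
    have -> : (p < x.+1) = false by lia.
    exact: H.
split=> //.
have E : forall x, x <= size K -> (if p < x then maxn (t x) v.+1 else t x) = t x \/
          (t x = v /\ (if p < x then maxn (t x) v.+1 else t x) = v.+1).
  move=> x xK; case: ifP => px; last by left.
  have := M p x (ltnW px) xK; rewrite -/v => vx.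
  have [vx'|vx'] := leqP v.+1 (t x); [left|right]; lia.
case Jv: (nth false J v); [left|right] => x xK; rewrite /iarr;
  (have [->|[-> ->]] := E x xK; first by rewrite eqxx); by rewrite Jv eqxx /= ?orbT.
Qed.

Lemma agree_step K J s t : shrinking K J s -> shrinking K J t ->
  (forall x, x <= size K -> s x = t x) -> step1 K J s t.
Proof. by move=> Hs Ht E; split=> //; left=> x xK; rewrite E // /iarr eqxx. Qed.

Lemma chain_ex K J : forall d m s t, size K - m <= d -> shrinking K J s -> shrinking K J t ->
  (forall x, x < m -> s x = t x) -> clos_refl_trans _ (step1 K J) s t.
Proof.
elim=> [|d IH] m s t dm Hs Ht E.
- apply: rt_step; apply: agree_step => // x xK.
  have [xm|xm] := ltnP x m; first by rewrite E.
  have -> : x = m by lia.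
  have [Km|Km] := ltnP m (size K); first lia.
  have [s0 sk _] := shr_loc_of Hs; have [t0 tk _] := shr_loc_of Ht.
  have -> : m = size K by lia.
  by rewrite sk tk.
have [Km|Km] := ltnP (size K) m.
  by apply: rt_step; apply: agree_step => // x xK; apply: E; lia.
have [Em|Nm] := eqVneq (s m) (t m).
  apply: (IH m.+1) => //; first lia.
  by move=> x; rewrite ltnS leq_eqVlt; case/orP=> [/eqP->//|]; apply: E.
have [s0 sk Hs'] := shr_loc_of Hs; have [t0 tk Ht'] := shr_loc_of Ht.
case: m E Nm dm Km => [|p] E Nm dm Km; first by rewrite s0 t0 eqxx in Nm.
have Ep := E p (ltnSn _).
have [Bs _ _ _] := Hs; have [Bt _ _ _] := Ht.
have [S1|[S1 S2]] := Hs' p Km; have [T1|[T1 T2]] := Ht' p Km.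
- by rewrite S1 T1 Ep eqxx in Nm.
- (* t jumps, s does not: modify s *)
  have vJ : s p < size J by have := Bt _ Km; rewrite T1 -Ep; lia.
  have St := modif Hs Km S1 vJ (etrans T2 (congr1 (nth false J) (esym Ep))).
  eapply rt_trans; first by apply: rt_step; exact: St.
  case: St => _ Hs2 _; apply: (IH p.+2) => //; first lia.
  move=> x xp; have [xp'|xp'] := ltnP p x.
    have -> : x = p.+1 by lia.
    by rewrite T1 S1 -Ep; lia.
  by apply: E; lia.
- (* s jumps, t does not: modify t *)
  have vJ : t p < size J by have := Bs _ Km; rewrite S1 Ep; lia.
  have St := modif Ht Km T1 vJ (etrans S2 (congr1 (nth false J) Ep)).
  eapply rt_trans; last by apply: rt_step; exact: (step1_sym St).
  case: St => _ Ht2 _; apply: (IH p.+2) => //; first lia.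
  move=> x xp; have [xp'|xp'] := ltnP p x.
    have -> : x = p.+1 by lia.
    by rewrite T1 S1 Ep; lia.
  by apply: E; lia.
- by rewrite S1 T1 Ep eqxx in Nm.
Qed.

Lemma chain_shr K J s t : shrinking K J s -> shrinking K J t -> clos_refl_trans _ (step1 K J) s t.
Proof. by move=> Hs Ht; apply: (@chain_ex K J (size K) 0) => //; lia. Qed.

Definition shrtup n (K J : 'I_n -> interval) (f : 'I_n -> nat -> nat) : Prop :=
  forall i, shrinking (K i) (J i) (f i).

Lemma fmapE n (f : 'I_n -> nat -> nat) x i : fmap f x i = f i (x i).
Proof. by rewrite /fmap ffunE. Qed.

Lemma fmap_valid n (K J : 'I_n -> interval) f x :
  shrtup K J f -> bvalid K x -> bvalid J (fmap f x).
Proof. by move=> H V i; rewrite fmapE; case: (H i) => B _ _ _; apply: B. Qed.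

Lemma fmap_bd n (K J : 'I_n -> interval) f x :
  shrtup K J f -> bvalid K x -> boxbd K x -> boxbd J (fmap f x).
Proof.
move=> H V [i Hi]; exists i; rewrite fmapE.
have [s0 sk _] := shr_loc_of (H i).
by case: Hi => ->; [left|right].
Qed.

Lemma fmap_arr n (K J : 'I_n -> interval) f x y :
  shrtup K J f -> bvalid K x -> bvalid K y -> boxarr K x y -> boxarr J (fmap f x) (fmap f y).
Proof.
move=> H Vx Vy [->|[i [A E]]]; first by left.
right; exists i; rewrite !fmapE; split.
  by case: (H i) => _ _ _; apply.
by move=> j ji; rewrite !fmapE E.
Qed.

Lemma pm_comp (G : digraph) (g : G) n (K J : 'I_n -> interval) f phi :
  pair_map g J phi -> shrtup K J f -> pair_map g K (fun x => phi (fmap f x)).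
Proof.
case=> A B H; split.
  by move=> x y Vx Vy a; apply: A; [apply: fmap_valid|apply: fmap_valid|apply: fmap_arr].
by move=> x Vx bx; apply: B; [apply: fmap_valid|apply: fmap_bd].
Qed.

Lemma hstep_comp (G : digraph) (g : G) n (K J : 'I_n -> interval) f phi psi :
  shrtup K J f -> hstep g J phi psi ->
  hstep g K (fun x => phi (fmap f x)) (fun x => psi (fmap f x)).
Proof.
move=> H [P1 P2 E D]; split; [exact: pm_comp P1 H|exact: pm_comp P2 H| |].
  by move=> x Vx bx; apply: E; [apply: fmap_valid|apply: fmap_bd].
by case: D => D; [left|right] => x Vx; apply: D; apply: fmap_valid.
Qed.

Lemma hom_comp (G : digraph) (g : G) n (K J : 'I_n -> interval) f phi psi :
  shrtup K J f -> homotopic g J phi psi ->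
  homotopic g K (fun x => phi (fmap f x)) (fun x => psi (fmap f x)).
Proof.
move=> H; elim=> [p q S|p|p q r _ IH1 _ IH2].
- by apply: rt_step; apply: hstep_comp.
- exact: rt_refl.
- exact: rt_trans IH1 IH2.
Qed.

Lemma eq_hstep (G : digraph) (g : G) n (K : 'I_n -> interval) phi psi :
  pair_map g K phi -> (forall x, bvalid K x -> phi x = psi x) -> hstep g K phi psi.
Proof.
move=> [A B] E.
have P : pair_map g K psi.
  split; first by move=> x y Vx Vy a; rewrite -!E //; apply: A.
  by move=> x Vx bx; rewrite -E //; apply: B.
split=> //; first by move=> x Vx bx; apply: E.
by left=> x Vx; rewrite E //; apply: arr_refl.
Qed.

Lemma eq_hom (G : digraph) (g : G) n (K : 'I_n -> interval) phi psi :
  pair_map g K phi -> (forall x, bvalid K x -> phi x = psi x) -> homotopic g K phi psi.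
Proof. by move=> P E; apply: rt_step; apply: eq_hstep. Qed.

Lemma fmap_comp n (f h : 'I_n -> nat -> nat) x :
  fmap f (fmap h x) = fmap (fun i => f i \o h i) x.
Proof. by apply/ffunP=> i; rewrite !fmapE. Qed.

Lemma shrtup_comp n (K L J : 'I_n -> interval) f h :
  shrtup K L f -> shrtup L J h -> shrtup K J (fun i => h i \o f i).
Proof. by move=> A B i; apply: shr_comp. Qed.

Lemma fmap_id n (x : {ffun 'I_n -> nat}) : fmap (fun _ => id) x = x.
Proof. by apply/ffunP=> i; rewrite fmapE. Qed.

Lemma coord_step (G : digraph) (g : G) n (K J : 'I_n -> interval) phi a b i0 s t :
  pair_map g J phi -> shrtup K J a -> shrtup K J b ->
  (forall j, j != i0 -> forall y, y <= size (K j) -> a j y = b j y) ->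
  step1 (K i0) (J i0) s t ->
  (forall y, y <= size (K i0) -> a i0 y = s y) -> (forall y, y <= size (K i0) -> b i0 y = t y) ->
  hstep g K (fun x => phi (fmap a x)) (fun x => phi (fmap b x)).
Proof.
move=> P Ha Hb Eab [_ _ D] Ea Eb.
have Pa := pm_comp P Ha; have Pb := pm_comp P Hb.
split=> //.
  by move=> x Vx bx; rewrite (proj2 Pa) // (proj2 Pb).
case: D => D; [left|right] => x Vx; apply: (proj1 P);
  try (apply: fmap_valid; eassumption);
  right; exists i0; rewrite !fmapE Ea // Eb //; (split; first by apply: D);
  by move=> j ji; rewrite !fmapE Eab // eq_sym.
Qed.

Lemma coord_chain (G : digraph) (g : G) n (K J : 'I_n -> interval) phi i0 s t :
  pair_map g J phi -> clos_refl_trans_1n _ (step1 (K i0) (J i0)) s t ->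
  forall a b, shrtup K J a -> shrtup K J b ->
  (forall j, j != i0 -> forall y, y <= size (K j) -> a j y = b j y) ->
  (forall y, y <= size (K i0) -> a i0 y = s y) -> (forall y, y <= size (K i0) -> b i0 y = t y) ->
  homotopic g K (fun x => phi (fmap a x)) (fun x => phi (fmap b x)).
Proof.
move=> P; elim=> [u|s' u t' St _ IH] a b Ha Hb Eab Ea Eb.
- apply: eq_hom; first exact: pm_comp P Ha.
  move=> x Vx; congr phi; apply/ffunP=> i; rewrite !fmapE.
  have [->|ni] := eqVneq i i0; first by rewrite Ea // Eb.
  exact: Eab.
- set c := fun j => if j == i0 then u else a j.
  have Hc : shrtup K J c.
    by move=> j; rewrite /c; case: eqP => [->|_]; [case: St|].
  apply: rt_trans (IH c b Hc Hb _ _ Eb).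
  + apply: rt_step; apply: (coord_step P Ha Hc _ St Ea).
      by move=> j ji y _; rewrite /c (negbTE ji).
    by move=> y _; rewrite /c eqxx.
  + by move=> j ji y yK; rewrite /c (negbTE ji); apply: Eab.
  + by move=> y _; rewrite /c eqxx.
Qed.

Lemma hom_shr (G : digraph) (g : G) n (K J : 'I_n -> interval) phi a b :
  pair_map g J phi -> shrtup K J a -> shrtup K J b ->
  homotopic g K (fun x => phi (fmap a x)) (fun x => phi (fmap b x)).
Proof.
move=> P Ha Hb.
pose c m := fun i : 'I_n => if i < m then b i else a i.
have Hc : forall m, shrtup K J (c m) by move=> m i; rewrite /c; case: ifP.
have Pa := pm_comp P Ha.
have C : forall m, homotopic g K (fun x => phi (fmap a x)) (fun x => phi (fmap (c m) x)).
  elim=> [|m IH].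
    apply: eq_hom => // x _; congr phi; apply/ffunP=> i; by rewrite !fmapE /c ltn0.
  apply: rt_trans IH _.
  have [mn|mn] := ltnP m n.
    pose i0 := Ordinal mn.
    apply: (@coord_chain _ _ _ _ _ _ i0 (a i0) (b i0) P).
    - apply: clos_rt_rt1n; exact: chain_shr.
    - exact: Hc.
    - exact: Hc.
    - move=> j ji y _; rewrite /c; have -> : (j < m.+1) = (j < m) => //.
      have : nat_of_ord j != m by apply: contra ji => /eqP E; apply/eqP/val_inj.
      lia.
    - by move=> y _; rewrite /c /= ltnn.
    - by move=> y _; rewrite /c /= ltnSn.
  apply: eq_hom; first exact: pm_comp P (Hc m).
  move=> x _; congr phi; apply/ffunP=> i; rewrite !fmapE /c.
  have h1 : i < m by apply: leq_trans (ltn_ord i) mn.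
  have h2 : i < m.+1 by apply: leq_trans (ltn_ord i) (leqW mn).
  by rewrite h1 h2.
apply: rt_trans (C n) _.
apply: eq_hom; first exact: pm_comp P (Hc n).
by move=> x _; congr phi; apply/ffunP=> i; rewrite !fmapE /c ltn_ord.
Qed.

Lemma crel_trans (G : digraph) (g : G) n (D : diagram n) (y x z : celem G D) :
  crel g x y -> crel g y z -> crel g x z.
Proof. exact: rst_trans. Qed.
Lemma crel_sym (G : digraph) (g : G) n (D : diagram n) (x y : celem G D) :
  crel g x y -> crel g y x.
Proof. exact: rst_sym. Qed.
Lemma crel_step (G : digraph) (g : G) n (D : diagram n) (x y : celem G D) :
  cstep g x y -> crel g x y.
Proof. exact: rst_step. Qed.
Lemma crel_refl (G : digraph) (g : G) n (D : diagram n) (x : celem G D) : crel g x x.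
Proof. exact: rst_refl. Qed.

Definition Rel (G : digraph) (g : G) n (D : diagram n) (E : celem G (Shr_diag n)) (e : celem G D) :=
  [/\ pair_map g E.1 E.2, dobj e.1, pair_map g (dtup e.1) e.2 &
      exists f, shrtup (dtup e.1) E.1 f /\
        forall x, bvalid (dtup e.1) x -> e.2 x = E.2 (fmap f x)].

Lemma CI (G : digraph) (g : G) n (D : diagram n)
  (HA : forall (a' a : dI D) f, dmor a' a f -> [/\ dobj a', dobj a & shrtup (dtup a') (dtup a) f])
  (HC : forall a b : dI D, dobj a -> dobj b -> exists c m1 m2, dmor c a m1 /\ dmor c b m2)
  (E : celem G (Shr_diag n)) (e1 e1' : celem G D) : Rel g E e1 -> Rel g E e1' -> @crel G g n D e1 e1'.
Proof.
case: E => J phi; case: e1 => a psi; case: e1' => a' psi'.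
case=> /= PJ Oa Pa [f [Hf Ef]] [_ /= Oa' Pa' [f' [Hf' Ef']]].
have [c [m1 [m2 [M1 M2]]]] := HC _ _ Oa Oa'.
have [Oc _ H1] := HA _ _ _ M1; have [_ _ H2] := HA _ _ _ M2.
have V1 : @cvalid G g n D (c, fun x => psi (fmap m1 x)) by split=> //; exact: pm_comp Pa H1.
have V2 : @cvalid G g n D (c, fun x => psi' (fmap m2 x)) by split=> //; exact: pm_comp Pa' H2.
apply: (@crel_trans G g n D (c, fun x => psi (fmap m1 x))).
  by apply: crel_step; split=> //; right; exists m1.
apply: (@crel_trans G g n D (c, fun x => psi' (fmap m2 x))); last first.
  by apply: crel_sym; apply: crel_step; split=> //; right; exists m2.
apply: crel_step; split=> //; left; split=> //=.
have Q1 : forall x, bvalid (dtup c) x -> psi (fmap m1 x) = phi (fmap (fun i => f i \o m1 i) x).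
  by move=> x Vx; rewrite Ef ?fmap_comp //; exact: fmap_valid H1 Vx.
have Q2 : forall x, bvalid (dtup c) x -> psi' (fmap m2 x) = phi (fmap (fun i => f' i \o m2 i) x).
  by move=> x Vx; rewrite Ef' ?fmap_comp //; exact: fmap_valid H2 Vx.
apply: rt_trans (eq_hom (proj2 V1) Q1) _.
apply: rt_trans (hom_shr PJ (shrtup_comp H1 Hf) (shrtup_comp H2 Hf')) _.
apply: eq_hom; first exact: pm_comp PJ (shrtup_comp H2 Hf').
by move=> x Vx; rewrite Q2.
Qed.

Lemma STEP (G : digraph) (g : G) n (D : diagram n)
  (HA : forall (a' a : dI D) f, dmor a' a f -> [/\ dobj a', dobj a & shrtup (dtup a') (dtup a) f])
  (HC : forall a b : dI D, dobj a -> dobj b -> exists c m1 m2, dmor c a m1 /\ dmor c b m2)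
  (E E' : celem G (Shr_diag n)) (e1 e1' : celem G D) :
  cstep g E E' -> Rel g E e1 -> Rel g E' e1' -> @crel G g n D e1 e1'.
Proof.
case: E E' => [J phi] [J' phi'].
case=> [[_ PJ] [_ PJ'] [[/= EJ Hh]|[h [/= Hh Eh]]]] R1 R2.
- subst J'; case: e1 R1 => a psi [_ /= Oa Pa [f [Hf Ef]]].
  pose y : celem G D := (a, fun x => phi' (fmap f x)).
  have Py : pair_map g (dtup a) y.2 by exact: pm_comp PJ' Hf.
  apply: (@crel_trans G g n D y); last first.
    by apply: (CI HA HC _ R2); split=> //; exists f.
  apply: crel_step; split=> //; left; split=> //=.
  apply: rt_trans (eq_hom Pa Ef) _.
  exact: hom_comp Hf Hh.
- apply: (CI HA HC R1).
  case: e1' R2 => a' psi' [_ /= Oa' Pa' [f' [Hf' Ef']]].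
  split=> //; exists (fun i => h i \o f' i); split; first exact: shrtup_comp Hf' Hh.
  by move=> x Vx /=; rewrite Ef' // Eh ?fmap_comp //; exact: fmap_valid Hf' Vx.
Qed.

Lemma crel_valid (G : digraph) (g : G) n (D : diagram n) (x y : celem G D) :
  crel g x y -> x = y \/ (cvalid g x /\ cvalid g y).
Proof.
elim=> [p q [Vp Vq _]|p|p q _ IH|p q r _ IH1 _ IH2]; [by right|by left| |].
- by case: IH => [->|[]]; [left|right].
- case: IH1 => [E1|[A B]]; case: IH2 => [E2|[C E]]; subst; auto.
Qed.

Lemma generic (G : digraph) (g : G) n (D : diagram n)
  (HA : forall (a' a : dI D) f, dmor a' a f -> [/\ dobj a', dobj a & shrtup (dtup a') (dtup a) f])
  (HB : forall J, exists2 a : dI D, dobj a & exists f, shrtup (dtup a) J f)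
  (HC : forall a b : dI D, dobj a -> dobj b -> exists c m1 m2, dmor c a m1 /\ dmor c b m2) :
  @canon_bijective G g n D (Shr_diag n) (@dtup n D).
Proof.
have Ex : forall E : celem G (Shr_diag n), cvalid g E -> exists e : celem G D, Rel g E e.
  case=> J phi [_ PJ]; have [a Oa [f Hf]] := HB J.
  exists (a, fun x => phi (fmap f x)); split=> //; first exact: pm_comp PJ Hf.
  by exists f.
have INJ : forall E E' : celem G (Shr_diag n), crel g E E' -> cvalid g E -> cvalid g E' ->
    forall e1 e1' : celem G D, Rel g E e1 -> Rel g E' e1' -> crel g e1 e1'.
  move=> E E'; elim=> [p q S|p|p q _ IH|p q r Hpq IH1 _ IH2] Vp Vr e1 e1' R1 R2.
  - exact: (@STEP G g n D HA HC p q e1 e1' S R1 R2).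
  - exact: (@CI G g n D HA HC p e1 e1' R1 R2).
  - exact: (@crel_sym G g n D e1' e1 (IH Vr Vp _ _ R2 R1)).
  - have Vq : cvalid g q by case: (crel_valid Hpq) => [<-|[]].
    have [e'' R3] := Ex q Vq.
    exact: (@crel_trans G g n D e'' e1 e1' (IH1 Vp Vq _ _ R1 R3) (IH2 Vq Vr _ _ R3 R2)).
split.
- case=> J phi [_ PJ]; have [a Oa [f Hf]] := HB J.
  exists (a, fun x => phi (fmap f x)); first by split=> //; exact: pm_comp PJ Hf.
  by apply: crel_sym; apply: crel_step; split=> //=; [split=> //; exact: pm_comp PJ Hf|right; exists f].
- case=> a psi; case=> a' psi' [Oa Pa] [Oa' Pa'] H.
  apply: (INJ _ _ H) => //=.
  + split=> //; exists (fun _ => id); split; first by move=> i; apply: shr_id.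
    by move=> x _; rewrite fmap_id.
  + split=> //; exists (fun _ => id); split; first by move=> i; apply: shr_id.
    by move=> x _; rewrite fmap_id.
Qed.

Lemma fchoice n (A : Type) (P : 'I_n -> A -> Prop) :
  (forall i, exists a, P i a) -> exists F : 'I_n -> A, forall i, P i (F i).
Proof.
move=> H; exists (fun i => proj1_sig (constructive_indefinite_description _ (H i))).
by move=> i; case: (constructive_indefinite_description _ (H i)).
Qed.

Lemma pair_ref (S : nice_subcat) A B : sobj S A -> sobj S B ->
  exists C m1 m2, smor S C A m1 /\ smor S C B m2.
Proof.
move=> OA OB.
have [L HL] := common_ref [:: A; B].
have [fa Ha] := HL A (mem_head _ _).
have [fb Hb] : exists f, shrinking L B f by apply: HL; rewrite !inE eqxx orbT.
have [L' OL' [k Hk]] := nice1 S L.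
have [m1 M1] := nice2 OA OL' (ex_intro _ _ (shr_comp Hk Ha)).
have [m2 M2] := nice2 OB OL' (ex_intro _ _ (shr_comp Hk Hb)).
by exists L', m1, m2.
Qed.

Theorem mainTheorem8 (G : digraph) (g : vtx G) (n : nat) :
  (forall S : 'I_n -> nice_subcat,
     @canon_bijective G g n (prod_diag S) (Shr_diag n) id)
  /\ (forall S : nice_subcat,
     @canon_bijective G g n (diag_diag n S) (Shr_diag n) (fun J _ => J)).
Proof.
split=> S.
- apply: (@generic G g n (prod_diag S)).
  + move=> a' a f /= H; split.
    * by move=> i; case: (smor_shr (H i)).
    * by move=> i; case: (smor_shr (H i)).
    * by move=> i; case: (smor_shr (H i)).
  + move=> J /=.
    have [F HF] : exists F : 'I_n -> (interval * (nat -> nat)),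
        forall i, sobj (S i) (F i).1 /\ shrinking (F i).1 (J i) (F i).2.
      apply: (@fchoice n _ (fun i (p : interval * (nat -> nat)) => sobj (S i) p.1 /\ shrinking p.1 (J i) p.2)) => i.
      have [J' O [f Hf]] := nice1 (S i) (J i).
      by exists (J', f).
    exists (fun i => (F i).1); first by move=> i; case: (HF i).
    by exists (fun i => (F i).2) => i; case: (HF i).
  + move=> a b /= Oa Ob.
    have [F HF] : exists F : 'I_n -> (interval * (nat -> nat) * (nat -> nat)),
        forall i, smor (S i) (F i).1.1 (a i) (F i).1.2 /\ smor (S i) (F i).1.1 (b i) (F i).2.
      apply: (@fchoice n _ (fun i (p : interval * (nat -> nat) * (nat -> nat)) =>
         smor (S i) p.1.1 (a i) p.1.2 /\ smor (S i) p.1.1 (b i) p.2)) => i.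
      have [C [m1 [m2 [M1 M2]]]] := pair_ref (Oa i) (Ob i).
      by exists (C, m1, m2).
    exists (fun i => (F i).1.1), (fun i => (F i).1.2), (fun i => (F i).2).
    by split=> i; case: (HF i).
- apply: (@generic G g n (diag_diag n S)).
  + move=> a' a f /= [f0 H E]; have [O1 O2 Hs] := smor_shr H; split=> // i.
    by rewrite E.
  + move=> J /=.
    have [L HL] := common_ref [seq J i | i <- enum 'I_n].
    have [F HF] : exists F : 'I_n -> (nat -> nat), forall i, shrinking L (J i) (F i).
      apply: (@fchoice n _ (fun i f => shrinking L (J i) f)) => i; apply: HL; apply: map_f; by rewrite mem_enum.
    have [L' OL' [k Hk]] := nice1 S L.
    exists L' => //; exists (fun i => F i \o k) => i; exact: shr_comp Hk (HF i).
  + move=> a b /= Oa Ob; have [C [m1 [m2 [M1 M2]]]] := pair_ref Oa Ob.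
    by exists C, (fun _ => m1), (fun _ => m2); split; [exists m1|exists m2].
Qed.
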